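(* Let $G$ be a finite group of order greater than $1$ and let $q$ be the smallest prime divisor of $|G|$. If $\mathcal{F}_{pp}(G)=\{1,f\}$ for some integer $f>1$, then $f\geq q$.
   Context: All groups are finite. For a group $G$ and a positive integer $n$ dividing $|G|$, let $F_n(G)=\{g\in G\mid g^n=1\}$. By Frobenius' theorem $|F_n(G)|=f_n\cdot n$ for a positive integer $f_n$, called the Frobenius quotient of $G$ for $n$. ${\rm exp}(G)$ denotes the exponent of $G$. A prime-power divisor of ${\rm exp}(G)$ is a positive divisor $n$ of ${\rm exp}(G)$ of the form $n=p^k$ with $p$ prime and $k\geq 0$ (so $n=1$ is included). $\mathcal{F}_{pp}(G)=\{f_n\mid n \text{ is a prime-power divisor of } {\rm exp}(G)\}$. *)

(* Defs.v *)
From mathcomp Require Import all_boot all_fingroup all_solvable.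
Set Implicit Arguments. Unset Strict Implicit. Unset Printing Implicit Defensive.
Local Open Scope group_scope.

Definition Fset (gT : finGroupType) (G : {set gT}) (n : nat) : {set gT} :=
  [set g in G | g ^+ n == 1].

(* Frobenius quotient f_n = |F_n(G)| / n (exact division by Frobenius' theorem
   whenever n divides |G|). *)
Definition frob_quot (gT : finGroupType) (G : {set gT}) (n : nat) : nat :=
  #|Fset G n| %/ n.

Definition is_prime_power (n : nat) : Prop :=
  exists p k, prime p /\ n = (p ^ k)%N.

Definition pp_divisor_exp (gT : finGroupType) (G : {set gT}) (n : nat) : Prop :=
  is_prime_power n /\ (n %| exponent G)%N.

Definition in_Fpp (gT : finGroupType) (G : {set gT}) (m : nat) : Prop :=
  exists n, pp_divisor_exp G n /\ m = frob_quot G n.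

(* Main.v *)
Require Import Defs.
From mathcomp Require Import all_boot all_fingroup all_solvable.
From mathcomp Require Import zify.
Set Implicit Arguments. Unset Strict Implicit. Unset Printing Implicit Defensive.

Section Helpers.
Local Open Scope group_scope.
Lemma diff_dvd (gT : finGroupType) (G : {group gT}) p j : prime p ->
  totient (p ^ j.+1) %| #|'Ldiv_(p ^ j.+1)(G) :\: 'Ldiv_(p ^ j)()|.
Proof.
move=> pr_p; set A := _ :\: _.
have oA x : x \in A -> #[x]%g = (p ^ j.+1)%N.
  rewrite !inE -!order_dvdn => /andP[xn /andP[_ xnp]].
  have [m lemj om] := dvdn_pfactor _ _ pr_p xnp.
  rewrite om; congr (expn p _); apply/eqP; rewrite eqn_leq lemj /=.
  rewrite ltnNge; apply: contra xn => lem; rewrite om dvdn_exp2l //.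
rewrite -sum1_card (partition_big_imset (@cycle _)) /=.
apply: dvdn_sum => _ /imsetP[x Ax ->].
rewrite (eq_bigl (generator <[x]>)) => [|y].
  by rewrite sum1dep_card -totient_gen oA.
rewrite /generator eq_sym andbC; case xy: (_ == _) => //=.
have oy : #[y]%g = #[x]%g by rewrite /order (eqP xy).
move: Ax; rewrite !inE -!order_dvdn oy => /andP[-> /andP[Gx ->]].
by rewrite andbT -cycle_subG -(eqP xy) cycle_subG.
Qed.

Lemma Fset_Ldiv (gT : finGroupType) (G : {group gT}) n : Fset G n = 'Ldiv_n(G).
Proof. by apply/setP=> x; rewrite !inE. Qed.

Lemma card_split (gT : finGroupType) (G : {group gT}) p j :
  #|'Ldiv_(p ^ j.+1)(G)| = #|'Ldiv_(p ^ j)(G)| + #|'Ldiv_(p ^ j.+1)(G) :\: 'Ldiv_(p ^ j)()|.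
Proof.
rewrite -(cardsID 'Ldiv_(p ^ j)() 'Ldiv_(p ^ j.+1)(G)); congr (_ + _).
apply: eq_card => x; rewrite !inE -!order_dvdn.
case: (boolP (#[x] %| p ^ j)) => h; rewrite ?andbT ?andbF //.
by rewrite (dvdn_trans h (dvdn_exp2l p (leqnSn j))) andbT.
Qed.

Lemma frob1 (gT : finGroupType) (G : {group gT}) : frob_quot G 1 = 1%N.
Proof.
rewrite /frob_quot divn1.
have -> : Fset G 1 = [set 1] by apply/setP=> x; rewrite !inE expg1; by case: eqP => [->|]; rewrite ?group1 ?andbF.
by rewrite cards1.
Qed.
End Helpers.

Lemma ivt (P : nat -> bool) k : ~~ P 0 -> P k -> exists j, j < k /\ ~~ P j /\ P j.+1.
Proof.
elim: k => [|k IH] h0 hk; first by rewrite hk in h0.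
case: (boolP (P k)) => hk'.
  by have [j [? ?]] := IH h0 hk'; exists j; split => //; apply: ltnW.
by exists k.
Qed.

Theorem corollary1p4 (gT : finGroupType) (G : {group gT}) (f : nat) :
  (1 < #|G|)%N ->
  (1 < f)%N ->
  (forall m, in_Fpp G m <-> (m = 1%N \/ m = f)) ->
  (pdiv #|G| <= f)%N.
Proof.
move=> G1 f1 H.
have [n [[[p [k [pr_p ->]]] dvdexp] fq]] := (H f).2 (or_intror erefl).
pose P := fun j => frob_quot G (p ^ j) == f.
have P0 : ~~ P 0 by rewrite /P expn0 frob1; apply/eqP; lia.
have Pk : P k by rewrite /P -fq.
have [j [ltjk [nPj PSj]]] := ivt P0 Pk.
have dG i : i <= k -> p ^ i %| #|G|.
  move=> lik; apply: dvdn_trans (exponent_dvdn G).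
  by apply: dvdn_trans dvdexp; rewrite dvdn_exp2l.
have vals i : i <= k -> frob_quot G (p ^ i) = 1 \/ frob_quot G (p ^ i) = f.
  move=> lik; apply/(H _).1; exists (p ^ i); split => //; split.
    by exists p, i.
  by apply: dvdn_trans dvdexp; rewrite dvdn_exp2l.
have fj : frob_quot G (p ^ j) = 1.
  by case: (vals j (ltnW ltjk)) => // e; rewrite /P e eqxx in nPj.
have fSj : frob_quot G (p ^ j.+1) = f by apply/eqP.
have L0 : #|('Ldiv_(p ^ j)(G))%g| = (p ^ j)%N.
  by rewrite -(divnK (Frobenius_Ldiv (dG j (ltnW ltjk)))) -Fset_Ldiv; move: fj; rewrite /frob_quot => ->; rewrite mul1n.
have L1 : #|('Ldiv_(p ^ j.+1)(G))%g| = (f * p ^ j.+1)%N.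
  by rewrite -(divnK (Frobenius_Ldiv (dG j.+1 ltjk))) -Fset_Ldiv; move: fSj; rewrite /frob_quot => ->.
have := diff_dvd G j pr_p.
have := card_split G p j; rewrite L0 L1 => e.
have -> : #|('Ldiv_(p ^ j.+1)(G))%g :\: ('Ldiv_(p ^ j)())%g| = ((f * p - 1) * p ^ j)%N.
  have p0 : 0 < p by apply: prime_gt0.
  rewrite expnS in e.
  by rewrite mulnBl mul1n -mulnA e addKn -expnS.
rewrite totient_pfactor // /= dvdn_pmul2r ?expn_gt0 ?prime_gt0 // => hd.
have p1 := prime_gt1 pr_p.
have : p.-1 %| f - 1.
  have e2 : (f * p - 1 = f * p.-1 + (f - 1))%N by nia.
  by rewrite e2 (dvdn_addr _ (dvdn_mull f (dvdnn _))) in hd.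
move=> /dvdn_leq hle.
have : p <= f by have := hle ltac:(lia); lia.
apply: leq_trans; apply: pdiv_min_dvd => //.
by have := dG 1 (leq_ltn_trans (leq0n j) ltjk); rewrite expn1.
Qed.
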